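(* Let $\mathrm{R}$ be a real closed field, let $g_i,h_j \in \mathrm{R}[X_1,\ldots, X_n]_{\le d}$ for $i=1,\ldots,r$, $j=1,\ldots,s$, and let \[ M=\{x \in \mathrm{R}^n \mid g_i(x) \le 0,\ h_j(x) = 0,\ i=1,\ldots,r,\ j=1,\ldots,s,\ x_k \in \{0,1\},\ k=1,\ldots,n\}. \] Let $E$ be a closed and bounded $\mathcal{P}$-semi-algebraic subset of $\mathrm{R}^{n}$ with $\mathcal{P} \subset \mathrm{R}[X_1,\ldots,X_{n}]_{\leq d}$ finite. Then there exist $\kappa >0$ and $\rho = (O(d))^{2n+14}$ (i.e. $\rho\le (Cd)^{2n+14}$ for an absolute constant $C$) such that \[ \mathrm{dist}(x,M)^{\rho} \le \kappa \cdot \psi (x) \quad \text{for all } x \in E, \] where \[ \psi(x) = \sqrt{\sum_{j=1}^{s} (h_j(x))^2} + \sqrt{\sum_{i=1}^{r} (\max\{g_i(x),0\})^2} +\sum_{k=1}^n |x_k(1-x_k)|. \]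
   Context: $\mathrm{dist}(x,M)=\inf_{y\in M}\|x-y\|$ with the Euclidean norm. For a finite set of polynomials $\mathcal{P}$, a $\mathcal{P}$-semi-algebraic set is the set of points satisfying a quantifier-free formula whose atoms are of the form $P=0$, $P>0$, $P<0$ with $P \in \mathcal{P}$. *)

(* Defs.v *)
From HB Require Import structures.
From mathcomp Require Import all_boot all_order all_algebra.
From mathcomp Require Import mpoly.
Set Implicit Arguments. Unset Strict Implicit. Unset Printing Implicit Defensive.
Import Order.TTheory GRing.Theory Num.Theory.
Local Open Scope ring_scope.

Section SemiAlg.
Variables (R : rcfType) (n : nat).

Definition point := 'I_n -> R.

Definition enorm (v : point) : R := Num.sqrt (\sum_(i < n) v i ^+ 2).
Definition edist (x y : point) : R := enorm (fun i => x i - y i).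

Definition is_dist (x : point) (M : point -> Prop) (delta : R) : Prop :=
  (forall y, M y -> delta <= edist x y) /\
  (forall d', (forall y, M y -> d' <= edist x y) -> d' <= delta).

Inductive qf_formula : Type :=
  | FEq0 of {mpoly R[n]}
  | FGt0 of {mpoly R[n]}
  | FLt0 of {mpoly R[n]}
  | FTrue
  | FFalse
  | FNot of qf_formula
  | FAnd of qf_formula & qf_formula
  | FOr of qf_formula & qf_formula.

Fixpoint qf_holds (x : point) (f : qf_formula) : Prop :=
  match f with
  | FEq0 p => p.@[x] = 0
  | FGt0 p => 0 < p.@[x]
  | FLt0 p => p.@[x] < 0
  | FTrue => True
  | FFalse => False
  | FNot f1 => ~ qf_holds x f1
  | FAnd f1 f2 => qf_holds x f1 /\ qf_holds x f2
  | FOr f1 f2 => qf_holds x f1 \/ qf_holds x f2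
  end.

Fixpoint atoms_in (P : seq {mpoly R[n]}) (f : qf_formula) : Prop :=
  match f with
  | FEq0 p | FGt0 p | FLt0 p => p \in P
  | FTrue | FFalse => True
  | FNot f1 => atoms_in P f1
  | FAnd f1 f2 | FOr f1 f2 => atoms_in P f1 /\ atoms_in P f2
  end.

Definition semialgebraic (P : seq {mpoly R[n]}) (S : point -> Prop) : Prop :=
  exists f, atoms_in P f /\ forall x, S x <-> qf_holds x f.

Definition closed_set (S : point -> Prop) : Prop :=
  forall x, ~ S x -> exists2 e : R, 0 < e & forall y, edist x y < e -> ~ S y.

Definition bounded_set (S : point -> Prop) : Prop :=
  exists B : R, forall x, S x -> enorm x <= B.

Variables (r s : nat) (g : 'I_r -> {mpoly R[n]}) (h : 'I_s -> {mpoly R[n]}).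

Definition Mset (x : point) : Prop :=
  (forall i, (g i).@[x] <= 0) /\ (forall j, (h j).@[x] = 0) /\
  (forall k, x k = 0 \/ x k = 1).

Definition psi (x : point) : R :=
  Num.sqrt (\sum_(j < s) ((h j).@[x]) ^+ 2)
  + Num.sqrt (\sum_(i < r) (Num.max ((g i).@[x]) 0) ^+ 2)
  + \sum_(k < n) `|x k * (1 - x k)|.

End SemiAlg.

(* Main.v *)
Require Import Defs.
From HB Require Import structures.
From mathcomp Require Import all_boot all_order all_algebra.
From mathcomp Require Import mpoly.
From mathcomp Require Import ring lra.
Import Order.TTheory GRing.Theory Num.Theory.
Local Open Scope ring_scope.
Set Implicit Arguments.

Section Lip.
Variables (R : rcfType) (n : nat) (B : R).
Definition inbox (x : 'I_n -> R) := forall k, `|x k| <= B.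
Definition LipF (f : ('I_n -> R) -> R) := exists K L : R,
  (forall x, inbox x -> `|f x| <= K) /\
  (forall x y, inbox x -> inbox y -> `|f x - f y| <= L * \sum_k `|x k - y k|).

Lemma LipF_ext f g : LipF f -> f =1 g -> LipF g.
Proof.
move=> [K [L [H1 H2]]] e; exists K, L; split=> [x|x y].
  rewrite -e; exact: H1.
rewrite -!e; exact: H2.
Qed.

Lemma LipF_const c : LipF (fun=> c).
Proof. exists `|c|, 0; split=> // x y _ _; by rewrite subrr normr0 mul0r. Qed.

Lemma LipF_coord k : LipF (fun x => x k).
Proof.
exists B, 1; split=> // x y _ _; rewrite mul1r (bigD1 k) //= lerDl.
by apply: sumr_ge0 => i _; exact: normr_ge0.
Qed.

Lemma LipF_add f g : LipF f -> LipF g -> LipF (fun x => f x + g x).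
Proof.
move=> [Kf [Lf [F1 F2]]] [Kg [Lg [G1 G2]]]; exists (Kf + Kg), (Lf + Lg); split.
  move=> x bx; apply: le_trans (ler_normD _ _) _; exact: lerD (F1 _ bx) (G1 _ bx).
move=> x y bx by_; have -> : f x + g x - (f y + g y) = (f x - f y) + (g x - g y) by ring.
apply: le_trans (ler_normD _ _) _; rewrite mulrDl; exact: lerD (F2 _ _ bx by_) (G2 _ _ bx by_).
Qed.

Lemma LipF_mul f g : LipF f -> LipF g -> LipF (fun x => f x * g x).
Proof.
move=> [Kf [Lf [F1 F2]]] [Kg [Lg [G1 G2]]]; exists (Kf * Kg), (Kf * Lg + Lf * Kg); split.
  move=> x bx; rewrite normrM; apply: ler_pM => //; [exact: F1|exact: G1].
move=> x y bx by_; have -> : f x * g x - f y * g y = f x * (g x - g y) + (f x - f y) * g y by ring.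
apply: le_trans (ler_normD _ _) _; rewrite !normrM.
have -> : (Kf * Lg + Lf * Kg) * \sum_k `|x k - y k| = Kf * (Lg * \sum_k `|x k - y k|) + (Lf * \sum_k `|x k - y k|) * Kg by ring.
apply: lerD; apply: ler_pM => //; by [exact: F1|exact: G2|exact: F2|exact: G1].
Qed.

Lemma LipF_prod (I : Type) (s : seq I) (F : I -> ('I_n -> R) -> R) :
  (forall i, LipF (F i)) -> LipF (fun x => \prod_(i <- s) F i x).
Proof.
move=> HF; elim: s => [|a s IH].
  by apply: LipF_ext (LipF_const 1) _ => x; rewrite big_nil.
apply: LipF_ext (LipF_mul (HF a) IH) _ => x; by rewrite big_cons.
Qed.

Lemma LipF_sum (I : Type) (s : seq I) (F : I -> ('I_n -> R) -> R) :
  (forall i, LipF (F i)) -> LipF (fun x => \sum_(i <- s) F i x).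
Proof.
move=> HF; elim: s => [|a s IH].
  by apply: LipF_ext (LipF_const 0) _ => x; rewrite big_nil.
apply: LipF_ext (LipF_add (HF a) IH) _ => x; by rewrite big_cons.
Qed.

Lemma LipF_exp f k : LipF f -> LipF (fun x => f x ^+ k).
Proof.
move=> Hf; elim: k => [|k IH].
  by apply: LipF_ext (LipF_const 1) _ => x; rewrite expr0.
apply: LipF_ext (LipF_mul Hf IH) _ => x; by rewrite exprS.
Qed.

Lemma LipF_meval (p : {mpoly R[n]}) : LipF (fun x => p.@[x]).
Proof.
apply: LipF_ext; last by move=> x; rewrite (mevalE x p).
apply: LipF_sum => m; apply: LipF_mul; first exact: LipF_const.
apply: LipF_prod => i; apply: LipF_exp; exact: LipF_coord.
Qed.
End Lip.
Arguments inbox {R n}.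
Arguments LipF {R n}.

Lemma sum_sq_le (R : rcfType) (I : Type) (s : seq I) (F : I -> R) :
  \sum_(i <- s) F i ^+ 2 <= (\sum_(i <- s) `|F i|) ^+ 2.
Proof.
elim: s => [|a s IH]; first by rewrite !big_nil expr0n.
rewrite !big_cons.
have Sge : 0 <= \sum_(i <- s) `|F i| by apply: sumr_ge0 => i _; exact: normr_ge0.
have ua : F a ^+ 2 = `|F a| ^+ 2 by rewrite real_normK // num_real.
have u0 : 0 <= `|F a| by exact: normr_ge0.
rewrite ua; move: IH Sge u0; set S := \sum_(i <- s) `|F i|; set T := \sum_(i <- s) F i ^+ 2.
move=> IH Sge u0; nra.
Qed.

Lemma sqrt_le_sum (R : rcfType) (I : Type) (s : seq I) (F : I -> R) :
  Num.sqrt (\sum_(i <- s) F i ^+ 2) <= \sum_(i <- s) `|F i|.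
Proof.
have Sge : 0 <= \sum_(i <- s) `|F i| by apply: sumr_ge0 => i _; exact: normr_ge0.
rewrite -[X in _ <= X](ger0_norm Sge) -sqrtr_sqr ler_sqrt ?sum_sq_le //.
exact: sqr_ge0.
Qed.

Lemma term_le_sqrt (R : rcfType) (m : nat) (F : 'I_m -> R) k :
  `|F k| <= Num.sqrt (\sum_(i < m) F i ^+ 2).
Proof.
rewrite -sqrtr_sqr ler_sqrt; last by apply: sumr_ge0 => i _; exact: sqr_ge0.
rewrite (bigD1 k) //= lerDl; by apply: sumr_ge0 => i _; exact: sqr_ge0.
Qed.

Lemma term_le_sum (R : rcfType) (m : nat) (F : 'I_m -> R) k :
  (forall i, 0 <= F i) -> F k <= \sum_(i < m) F i.
Proof. move=> H; rewrite (bigD1 k) //= lerDl; by apply: sumr_ge0 => i _. Qed.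

Lemma round_bound (R : rcfType) (x : R) :
  `|x - (if 1/2 < x then 1 else 0)| <= 2 * `|x * (1 - x)|.
Proof.
rewrite normrM; case: ifP => hx.
  have h1 : 1 <= 2 * `|x| by have := ler_norm x; lra.
  rewrite distrC; have := normr_ge0 (1 - x); nra.
have h1 : 1 <= 2 * `|1 - x|.
  have := ler_norm (1 - x); move/negbT: hx; rewrite -leNgt; lra.
rewrite subr0; have := normr_ge0 x; nra.
Qed.

Lemma fin_min (R : rcfType) (I : finType) (Q : I -> R -> Prop) :
  (forall i, exists e, 0 < e /\ Q i e) ->
  (forall i e e', 0 < e' -> e' <= e -> Q i e -> Q i e') ->
  exists e, 0 < e /\ forall i, Q i e.
Proof.
move=> Hex Hmono.
suff H : forall s : seq I, exists e, 0 < e /\ forall i, i \in s -> Q i e.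
  have [e [e0 He]] := H (enum I); by exists e; split=> // i; apply: He; rewrite mem_enum.
elim=> [|a s [es [es0 Hs]]]; first by exists 1.
have [ea [ea0 Ha]] := Hex a.
have m0 : 0 < Num.min ea es by rewrite lt_min ea0 es0.
exists (Num.min ea es); split=> // i; rewrite in_cons => /orP [/eqP -> | his].
  by apply: (Hmono a ea (Num.min ea es)) => //; rewrite ge_min lexx.
by apply: (Hmono i es (Num.min ea es)) => //; [rewrite ge_min lexx orbT | exact: Hs].
Qed.

From Stdlib Require Import FunctionalExtensionality.

Section Main.
Variables (R : rcfType) (n r s : nat) (g : 'I_r -> {mpoly R[n]}) (h : 'I_s -> {mpoly R[n]}).

Definition pt (b : {ffun 'I_n -> bool}) : point R n := fun k => if b k then 1 else 0.
Definition Mb (b : {ffun 'I_n -> bool}) : bool :=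
  [forall i, (g i).@[pt b] <= 0] && [forall j, (h j).@[pt b] == 0].

Lemma Mb_Mset b : Mb b -> Mset g h (pt b).
Proof.
case/andP => /forallP H1 /forallP H2; split; [exact: H1|split].
  by move=> j; apply/eqP; exact: H2.
by move=> k; rewrite /pt; case: (b k); [right|left].
Qed.

Lemma Mset_Mb y : Mset g h y -> exists b, Mb b /\ y = pt b.
Proof.
move=> [H1 [H2 H3]].
have e : y = pt [ffun k => y k == 1].
  apply: functional_extensionality => k; rewrite /pt ffunE.
  by case: (H3 k) => ->; rewrite ?eqxx // eq_sym oner_eq0.
exists [ffun k => y k == 1]; split=> //; rewrite /Mb -e; apply/andP; split.
  by apply/forallP.
by apply/forallP => j; apply/eqP.
Qed.

Lemma pt_norm b k : `|pt b k| <= 1.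
Proof. by rewrite /pt; case: (b k); rewrite ?normr1 ?normr0. Qed.

Lemma psi_ge0 x : 0 <= psi g h x.
Proof.
rewrite /psi; apply: addr_ge0; first apply: addr_ge0; try exact: sqrtr_ge0.
by apply: sumr_ge0 => i _; exact: normr_ge0.
Qed.

Lemma psi_ge_g i x : (g i).@[x] <= psi g h x.
Proof.
rewrite /psi; apply: (@le_trans _ _ (Num.max (g i).@[x] 0)); first by rewrite le_max lexx.
apply: le_trans (ler_norm _) _.
have H := @term_le_sqrt _ _ (fun i => Num.max (g i).@[x] 0) i; rewrite /= in H.
apply: (le_trans H).
have a0 := sqrtr_ge0 (\sum_(j < s) (h j).@[x] ^+ 2).
have b0 := sqrtr_ge0 (\sum_(i < r) (Num.max (g i).@[x] 0) ^+ 2).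
have c0 : 0 <= \sum_(k < n) `|x k * (1 - x k)| by apply: sumr_ge0 => k _; exact: normr_ge0.
lra.
Qed.

Lemma psi_ge_h j x : `|(h j).@[x]| <= psi g h x.
Proof.
rewrite /psi; have H := @term_le_sqrt _ _ (fun j => (h j).@[x]) j; rewrite /= in H.
apply: (le_trans H).
have a0 := sqrtr_ge0 (\sum_(j < s) (h j).@[x] ^+ 2).
have b0 := sqrtr_ge0 (\sum_(i < r) (Num.max (g i).@[x] 0) ^+ 2).
have c0 : 0 <= \sum_(k < n) `|x k * (1 - x k)| by apply: sumr_ge0 => k _; exact: normr_ge0.
lra.
Qed.

Lemma psi_ge_sum x : \sum_(k < n) `|x k * (1 - x k)| <= psi g h x.
Proof.
rewrite /psi.
have a0 := sqrtr_ge0 (\sum_(j < s) (h j).@[x] ^+ 2).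
have b0 := sqrtr_ge0 (\sum_(i < r) (Num.max (g i).@[x] 0) ^+ 2).
have c0 : 0 <= \sum_(k < n) `|x k * (1 - x k)| by apply: sumr_ge0 => k _; exact: normr_ge0.
lra.
Qed.

Lemma edist_le_sum (x y : point R n) : edist x y <= \sum_k `|x k - y k|.
Proof. exact: sqrt_le_sum. Qed.

Lemma coord_le_enorm (x : point R n) k : `|x k| <= enorm x.
Proof. exact: (@term_le_sqrt _ _ x k). Qed.

Definition Qp (B1 : R) (b : {ffun 'I_n -> bool}) (e : R) : Prop :=
  forall x : point R n, inbox B1 x -> (forall k, `|x k - pt b k| <= e) ->
    Mb b \/ e <= psi g h x.

Lemma sum_small (x y : point R n) e : (forall k, `|x k - y k| <= e) ->
  \sum_k `|x k - y k| <= n%:R * e.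
Proof.
move=> H; apply: le_trans (ler_sum _ (fun k _ => H k)) _.
by rewrite sumr_const card_ord mulr_natl.
Qed.

Lemma Qp_exists B1 b : 1 <= B1 -> exists e, 0 < e /\ Qp B1 b e.
Proof.
move=> B11.
have bb : inbox B1 (pt b) by move=> k; apply: le_trans (pt_norm b k) B11.
case Hb: (Mb b); first by exists 1; split=> // x _ _; left.
move: Hb; rewrite /Mb => /negbT; rewrite negb_and !negb_forall => /orP [].
  case/existsP => i; rewrite -ltNge => vpos.
  have [K [L [_ HL]]] := LipF_meval B1 (g i).
  set v := (g i).@[pt b] in vpos.
  set w := `|L| * n%:R.
  have w0 : 0 <= w by apply: mulr_ge0; [exact: normr_ge0 | exact: ler0n].
  exists (v / (2 * (w + 1))); split; first by apply: divr_gt0 => //; lra.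
  set e := v / (2 * (w + 1)).
  have he : e * w + e = v / 2 by rewrite /e; field; lra.
  have e0 : 0 < e by apply: divr_gt0 => //; lra.
  move=> x bx hx; right.
  have S0 : 0 <= \sum_k `|x k - pt b k| by apply: sumr_ge0 => k _; exact: normr_ge0.
  have h1 := HL _ _ bx bb.
  have h2 : L * \sum_k `|x k - pt b k| <= w * e.
    apply: le_trans (_ : `|L| * \sum_k `|x k - pt b k| <= _).
      by apply: ler_wpM2r => //; exact: ler_norm.
    by rewrite /w -mulrA; apply: ler_wpM2l; [exact: normr_ge0 | exact: sum_small].
  have h3 := ler_norm ((g i).@[pt b] - (g i).@[x]).
  rewrite distrC in h1.
  apply: le_trans (psi_ge_g i x); rewrite -/v in h1 h3 *.
  have : e * w = w * e by rewrite mulrC.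
  lra.
case/existsP => j vpos.
have [K [L [_ HL]]] := LipF_meval B1 (h j).
set v := `|(h j).@[pt b]|.
have vp : 0 < v by rewrite normr_gt0.
set w := `|L| * n%:R.
have w0 : 0 <= w by apply: mulr_ge0; [exact: normr_ge0 | exact: ler0n].
exists (v / (2 * (w + 1))); split; first by apply: divr_gt0 => //; lra.
set e := v / (2 * (w + 1)).
have he : e * w + e = v / 2 by rewrite /e; field; lra.
have e0 : 0 < e by apply: divr_gt0 => //; lra.
move=> x bx hx; right.
have h1 := HL _ _ bx bb.
have h2 : L * \sum_k `|x k - pt b k| <= w * e.
  apply: le_trans (_ : `|L| * \sum_k `|x k - pt b k| <= _).
    apply: ler_wpM2r; last exact: ler_norm.
    by apply: sumr_ge0 => k _; exact: normr_ge0.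
  by rewrite /w -mulrA; apply: ler_wpM2l; [exact: normr_ge0 | exact: sum_small].
have h3 : v <= `|(h j).@[x]| + `|(h j).@[x] - (h j).@[pt b]|.
  have H := ler_normB ((h j).@[x]) ((h j).@[x] - (h j).@[pt b]).
  have E : (h j).@[x] - ((h j).@[x] - (h j).@[pt b]) = (h j).@[pt b] by ring.
  by rewrite E in H.
apply: le_trans (psi_ge_h j x).
have : e * w = w * e by rewrite mulrC.
lra.
Qed.

Lemma Qp_mono B1 b e e' : 0 < e' -> e' <= e -> Qp B1 b e -> Qp B1 b e'.
Proof.
move=> _ le H x bx hx; case: (H x bx) => [k|->|]; [exact: le_trans (hx k) le | by left|].
by move=> ?; right; exact: le_trans le _.
Qed.

End Main.
Arguments pt {R n}.

Theorem corollary6p1 :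
  exists C : nat,
  forall (R : rcfType) (n d r s : nat)
    (g : 'I_r -> {mpoly R[n]}) (h : 'I_s -> {mpoly R[n]})
    (P : seq {mpoly R[n]}) (E : point R n -> Prop),
    (0 < d)%N ->
    (forall i, (msize (g i) <= d.+1)%N) ->
    (forall j, (msize (h j) <= d.+1)%N) ->
    (forall p, p \in P -> (msize p <= d.+1)%N) ->
    semialgebraic P E -> closed_set E -> bounded_set E ->
    (exists y, Mset g h y) ->
    exists (kappa : R) (rho : nat),
      0 < kappa /\ (rho <= (C * d) ^ (2 * n + 14))%N /\
      forall x, E x ->
        exists delta : R, is_dist x (Mset g h) delta /\
          delta ^+ rho <= kappa * psi g h x.
Proof.
exists 1%N => R n d r s g h P E d0 _ _ _ _ _ [B HB] [y0 My0].
set B1 := Num.max B 1.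
have B11 : 1 <= B1 by rewrite le_max lexx orbT.
have BB1 : B <= B1 by rewrite le_max lexx.
have [e [e0 He]] := @fin_min R _ _ (fun b => @Qp_exists R n r s g h B1 b B11)
  (fun b => @Qp_mono R n r s g h B1 b).
set D := n%:R * (B1 + 1).
have D0 : 0 <= D by apply: mulr_ge0; [exact: ler0n | lra].
set c := 2 * D / e.
have c0 : 0 <= c by apply: divr_ge0; [lra | exact: ltW].
exists (2 + c), 1%N; split; first lra.
split; first by rewrite mul1n expn_gt0 d0.
move=> x Ex.
have bx : inbox B1 x.
  by move=> k; apply: le_trans (coord_le_enorm x k) (le_trans (HB x Ex) BB1).
have [b' [Mb' _]] := Mset_Mb My0.
case: (@arg_minP _ _ _ b' (Mb g h) (fun b => edist x (pt b)) Mb') => b0 Mb0 Hmin.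
exists (edist x (pt b0)); split.
  split.
    by move=> y /Mset_Mb [b [Mb ->]]; exact: Hmin.
  by move=> d' H; apply: H; exact: Mb_Mset.
rewrite expr1.
have psi0 := psi_ge0 g h x.
have deltaD : edist x (pt b0) <= D.
  apply: le_trans (edist_le_sum _ _) _; apply: sum_small => k.
  apply: le_trans (ler_normB _ _) _; apply: lerD; [exact: bx | exact: pt_norm].
have bad : e / 2 <= psi g h x -> edist x (pt b0) <= (2 + c) * psi g h x.
  move=> hp.
  have E1 : c * (e / 2) = D by rewrite /c; field; rewrite gt_eqF.
  have E2 : c * (e / 2) <= c * psi g h x by apply: ler_wpM2l.
  have E3 : 0 <= c * psi g h x by apply: mulr_ge0.
  lra.
case: (boolP [forall k, `|x k * (1 - x k)| < e / 2]) => [/forallP Hk | ].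
  set b := [ffun k => 1/2 < x k].
  have hb : forall k, `|x k - pt b k| <= 2 * `|x k * (1 - x k)|.
    by move=> k; rewrite /pt ffunE; exact: round_bound.
  have hb' : forall k, `|x k - pt b k| <= e.
    by move=> k; apply: le_trans (hb k) _; have := Hk k; lra.
  case: (He b x bx hb') => [Mbb | hp]; last by apply: bad; lra.
  apply: le_trans (Hmin b Mbb) _; apply: le_trans (edist_le_sum _ _) _.
  apply: le_trans (ler_sum _ (fun k _ => hb k)) _; rewrite -mulr_sumr.
  have := psi_ge_sum g h x.
  have E3 : 0 <= c * psi g h x by apply: mulr_ge0.
  lra.
rewrite negb_forall => /existsP [k]; rewrite -leNgt => hk.
apply: bad; apply: le_trans hk _; apply: le_trans (psi_ge_sum g h x).
by apply: term_le_sum => i; exact: normr_ge0.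
Qed.
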